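(* Let $A:\mathbb{R}^d\rightrightarrows\mathbb{R}^d$ be maximal monotone with $A^{-1}(0)\neq\emptyset$ and $\mathrm{dom}(A)$ closed and bounded, let $p\geq1$ be an integer, $\sigma\in(0,1)$, $\theta>0$, $x_0\in\mathbb{R}^d$. Suppose sequences $\lambda_k>0$, $y_k,v_k,x_k\in\mathbb{R}^d$, $\epsilon_k\geq0$ ($k\geq1$) satisfy, for every $k\geq0$, \[ v_{k+1}\in A^{\epsilon_{k+1}}(y_{k+1}),\quad \|\lambda_{k+1}v_{k+1}+y_{k+1}-x_k\|^2+2\lambda_{k+1}\epsilon_{k+1}\leq\sigma^2\|y_{k+1}-x_k\|^2,\quad \lambda_{k+1}\|y_{k+1}-x_k\|^{p-1}\geq\theta, \] and $x_{k+1}=x_k-\lambda_{k+1}v_{k+1}$. Let $\tilde y_k=\frac{1}{\sum_{i=1}^k\lambda_i}\sum_{i=1}^k\lambda_iy_i$. Then for integers $k\geq1$, \[ \textsc{gap}(\tilde y_k)=O(k^{-\frac{p+1}{2}}),\qquad \inf_{1\leq i\leq k}\|v_i\|=O(k^{-\frac p2}),\qquad \inf_{1\leq i\leq k}\epsilon_i=O(k^{-\frac{p+1}{2}}). \] In addition, if $\epsilon_k=0$ for all $k\geq1$ and the error bound condition holds (there exist $\delta,\kappa>0$ such that $\textsc{dist}(0,Ax)\leq\delta$ implies $\textsc{dist}(x,A^{-1}(0))\leq\kappa\,\textsc{dist}(0,Ax)$), then $\{x_k\}$ converges to $A^{-1}(0)$ at a local linear rate, i.e., there exist $k_0$ and $q\in(0,1)$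 with $\textsc{dist}(x_{k+1},A^{-1}(0))^2\leq q\,\textsc{dist}(x_k,A^{-1}(0))^2$ for all $k\geq k_0$.
   Context: The $\epsilon$-enlargement of $A$ is $A^{\epsilon}(x)=\{v\in\mathbb{R}^d:\langle x-\tilde x,v-\tilde v\rangle\geq-\epsilon\ \forall\tilde x\in\mathbb{R}^d,\ \forall\tilde v\in A\tilde x\}$. The gap function is $\textsc{gap}(x)=\sup_{z\in\mathrm{dom}(A)}\sup_{\xi\in Az}\langle\xi,x-z\rangle$; $\textsc{dist}(x,S)=\inf_{z\in S}\|x-z\|$. These sequences are the iterates of the paper's ''conceptual algorithmic framework'' (run without hitting the stopping test $0\in Ax_k$). *)

(* Defs.v *)
From HB Require Import structures.
From mathcomp Require Import all_boot all_order all_algebra.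
From mathcomp Require Import all_classical all_reals all_analysis.
Set Implicit Arguments. Unset Strict Implicit. Unset Printing Implicit Defensive.
Import Order.TTheory GRing.Theory Num.Theory.
Import numFieldNormedType.Exports.
Local Open Scope classical_set_scope.
Local Open Scope ring_scope.

Section Defs.
Variables (R : realType) (d : nat).

Definition dotp (u v : 'rV[R]_d) : R := \sum_(i < d) u ord0 i * v ord0 i.
Definition enorm (u : 'rV[R]_d) : R := Num.sqrt (dotp u u).

Definition operator := 'rV[R]_d -> set 'rV[R]_d.

Definition monotone_op (A : operator) : Prop :=
  forall x y u v, A x u -> A y v -> 0 <= dotp (x - y) (u - v).

Definition maximal_monotone (A : operator) : Prop :=
  monotone_op A /\
  forall B : operator, monotone_op B -> (forall x v, A x v -> B x v) ->
    forall x v, B x v -> A x v.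

Definition opdom (A : operator) : set 'rV[R]_d := [set x | exists v, A x v].

Definition zeros (A : operator) : set 'rV[R]_d := [set x | A x 0].

Definition enlargement (A : operator) (eps : R) : operator :=
  fun x => [set v | forall xt vt, A xt vt -> - eps <= dotp (x - xt) (v - vt)].

Definition gap (A : operator) (x : 'rV[R]_d) : \bar R :=
  ereal_sup [set e : \bar R | exists z xi,
               opdom A z /\ A z xi /\ e = (dotp xi (x - z))%:E].

(* distance to a set, valued in the extended reals (= +oo for the empty set) *)
Definition setdist (x : 'rV[R]_d) (S : set 'rV[R]_d) : \bar R :=
  ereal_inf [set (enorm (x - z))%:E | z in S].

End Defs.

(* Main.v *)
Require Import Defs.
From HB Require Import structures.
From mathcomp Require Import all_boot all_order all_algebra.
From mathcomp Require Import all_classical all_reals all_analysis.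
From mathcomp Require Import ring lra.
Import Order.TTheory GRing.Theory Num.Theory.
Import numFieldNormedType.Exports.
Local Open Scope classical_set_scope.
Local Open Scope ring_scope.

Set Implicit Arguments. Unset Strict Implicit. Unset Printing Implicit Defensive.

Section Helpers.
Variables (R : realType) (d : nat).
Local Notation V := 'rV[R]_d.
Implicit Types (u w z : V) (a : R).

Lemma dotpC u w : dotp u w = dotp w u.
Proof. by rewrite /dotp; apply: eq_bigr => i _; rewrite mulrC. Qed.

Lemma dotpDl u w z : dotp (u + w) z = dotp u z + dotp w z.
Proof. by rewrite /dotp -big_split; apply: eq_bigr => i _; rewrite mxE mulrDl. Qed.

Lemma dotpZl a u z : dotp (a *: u) z = a * dotp u z.
Proof. by rewrite /dotp mulr_sumr; apply: eq_bigr => i _; rewrite mxE mulrA. Qed.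

Lemma dotpNl u z : dotp (- u) z = - dotp u z.
Proof. by rewrite /dotp -sumrN; apply: eq_bigr => i _; rewrite mxE mulNr. Qed.

Lemma dotp0l z : dotp 0 z = 0.
Proof. by rewrite /dotp big1 // => i _; rewrite mxE mul0r. Qed.

Lemma dotpBl u w z : dotp (u - w) z = dotp u z - dotp w z.
Proof. by rewrite dotpDl dotpNl. Qed.

Lemma dotpDr u w z : dotp z (u + w) = dotp z u + dotp z w.
Proof. by rewrite dotpC dotpDl !(dotpC z). Qed.

Lemma dotpBr u w z : dotp z (u - w) = dotp z u - dotp z w.
Proof. by rewrite dotpC dotpBl !(dotpC z). Qed.

Lemma dotpNr u z : dotp z (- u) = - dotp z u.
Proof. by rewrite dotpC dotpNl dotpC. Qed.

Lemma dotpZr a u z : dotp z (a *: u) = a * dotp z u.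
Proof. by rewrite dotpC dotpZl dotpC. Qed.

Lemma dotp_suml (I : Type) (r : seq I) (P : pred I) (F : I -> V) z :
  dotp (\sum_(i <- r | P i) F i) z = \sum_(i <- r | P i) dotp (F i) z.
Proof.
elim/big_rec2: _ => [|i a b _ <-]; first exact: dotp0l.
by rewrite dotpDl.
Qed.

Lemma dotp_sumr (I : Type) (r : seq I) (P : pred I) (F : I -> V) z :
  dotp z (\sum_(i <- r | P i) F i) = \sum_(i <- r | P i) dotp z (F i).
Proof. by rewrite dotpC dotp_suml; apply: eq_bigr => i _; rewrite dotpC. Qed.

Lemma dotpp_ge0 u : 0 <= dotp u u.
Proof. by rewrite /dotp; apply: sumr_ge0 => i _; rewrite -expr2 sqr_ge0. Qed.

Lemma enorm_ge0 u : 0 <= enorm u.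
Proof. exact: sqrtr_ge0. Qed.

Lemma enorm_sq u : enorm u ^+ 2 = dotp u u.
Proof. by rewrite /enorm sqr_sqrtr // dotpp_ge0. Qed.

Lemma enormN u : enorm (- u) = enorm u.
Proof. by rewrite /enorm dotpNl dotpNr opprK. Qed.

Lemma nsqD u w : dotp (u + w) (u + w) = dotp u u + 2 * dotp u w + dotp w w.
Proof. rewrite dotpDl !dotpDr (dotpC w u); ring. Qed.

Lemma nsqB u w : dotp (u - w) (u - w) = dotp u u - 2 * dotp u w + dotp w w.
Proof. rewrite dotpBl !dotpBr (dotpC w u); ring. Qed.

Lemma nsqB_le u w : dotp (u - w) (u - w) <= 2 * dotp u u + 2 * dotp w w.
Proof.
have := dotpp_ge0 (u + w); rewrite nsqD nsqB => h.
by rewrite -subr_ge0; apply: le_trans h _; rewrite le_eqVlt; apply/orP; left; apply/eqP; ring.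
Qed.


Lemma setdistP (x : V) (S : set V) : S !=set0 ->
  exists r : R, [/\ 0 <= r, setdist x S = r%:E,
     (forall z, S z -> r <= enorm (x - z)) &
     (forall e, 0 < e -> exists2 z, S z & enorm (x - z) < r + e)].
Proof.
move=> [z0 Sz0].
set T := [set (enorm (x - z))%:E | z in S].
have h0 : (0 <= ereal_inf T)%E.
  by apply: le_ereal_inf_tmp => _ [z _ <-]; rewrite lee_fin enorm_ge0.
have h1 : (ereal_inf T <= (enorm (x - z0))%:E)%E.
  by apply: ereal_inf_lbound; exists z0.
rewrite /setdist -/T.
case E: (ereal_inf T) h0 h1 => [r| |] // h0 h1.
exists r; split => //.
- move=> z Sz; have : (ereal_inf T <= (enorm (x - z))%:E)%E by apply: ereal_inf_lbound; exists z.
  by rewrite E lee_fin.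
- move=> e e0.
  have : (ereal_inf T < (r + e)%:E)%E by rewrite E lte_fin ltrDl.
  by move=> /ereal_inf_lt [_ [z Sz <-]]; rewrite lte_fin => h; exists z.
Qed.

Lemma lim_sq_le (X r Y : R) : 0 <= r ->
  (forall e, 0 < e -> X <= (r + e) ^+ 2 + Y) -> X <= r ^+ 2 + Y.
Proof.
move=> r0 h; apply/ler_addgt0Pr => e' e'0.
set e := Num.min 1 (e' / (2 * r + 1)).
have r1 : 0 < 2 * r + 1 by rewrite ltr_wpDl // mulr_ge0.
have e0 : 0 < e by rewrite lt_min ltr01 divr_gt0.
have e1 : e <= 1 by rewrite ge_min lexx.
have e2 : e * (2 * r + 1) <= e' by rewrite -ler_pdivlMr // ge_min lexx orbT.
apply: le_trans (h e e0) _.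
have : e * e <= e * 1 by rewrite ler_pM2l.
nra.
Qed.

Lemma telescope_le (g f : nat -> R) :
  (forall k, g k <= f k - f k.+1) -> forall n, \sum_(k < n) g k <= f 0%N - f n.
Proof.
move=> h; elim=> [|n IH]; first by rewrite big_ord0 subrr.
rewrite big_ord_recr /=; have := h n; lra.
Qed.

Lemma exists_small (f : nat -> R) (k : nat) : (0 < k)%N ->
  exists2 i, (i < k)%N & k%:R * f i <= \sum_(j < k) f j.
Proof.
move=> k0; case: (pselect (exists2 i, (i < k)%N & k%:R * f i <= \sum_(j < k) f j)) => // hno.
exfalso.
have hall : forall i : 'I_k, \sum_(j < k) f j < k%:R * f i.
  move=> i; rewrite ltNge; apply/negP => hi; apply: hno; exists i => //.
have := ltr_sum (P := xpredT) (r := index_enum 'I_k) _ (fun i _ => hall i).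
rewrite -/(\sum_(i < k) \sum_(j < k) f j) -/(\sum_(i < k) k%:R * f i).
rewrite sumr_const card_ord -mulr_sumr mulr_natl ltxx => h; suff : false by []; apply: h.
by apply/hasP; exists (Ordinal k0) => //; exact: mem_index_enum.
Qed.

Lemma powR_half (r : R) (n : nat) : 0 < r ->
  r `^ (- (n%:R / 2)) = (Num.sqrt r ^+ n)^-1.
Proof.
move=> r0; rewrite powRN mulrC powRrM powR12_sqrt ?ltW // powR_mulrn //.
Qed.


Lemma hpe_step (lam eps sigma : R) (xk y v z : V) :
  dotp (lam *: v + y - xk) (lam *: v + y - xk) + 2 * lam * eps
     <= sigma ^+ 2 * dotp (y - xk) (y - xk) ->
  2 * lam * (dotp v (y - z) + eps) + (1 - sigma ^+ 2) * dotp (y - xk) (y - xk)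
   <= dotp (xk - z) (xk - z) - dotp (xk - lam *: v - z) (xk - lam *: v - z).
Proof.
have e1 : y - z = (y - xk) + (xk - z) by rewrite addrA subrK.
have e2 : lam *: v + y - xk = lam *: v + (y - xk) by rewrite addrA.
have e3 : xk - lam *: v - z = (xk - z) - lam *: v by rewrite addrAC.
rewrite e1 e2 e3.
set W := y - xk; set Rr := xk - z.
rewrite (nsqD (lam *: v) W) (nsqB Rr (lam *: v)) dotpDr !dotpZl !dotpZr (dotpC Rr).
set a := dotp v W; set b := dotp v Rr; set c := dotp v v.
set w := dotp W W; set r := dotp Rr Rr.
nra.
Qed.

Lemma hpe_v (lam eps sigma : R) (w v : V) : 0 < lam -> 0 <= eps ->
  sigma ^+ 2 <= 1 ->
  dotp (lam *: v + w) (lam *: v + w) + 2 * lam * eps <= sigma ^+ 2 * dotp w w ->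
  lam * enorm v <= 2 * enorm w.
Proof.
move=> l0 e0 s1 h.
have h1 := nsqB_le (lam *: v + w) w.
rewrite addrK !dotpZl !dotpZr in h1.
have hw := dotpp_ge0 w.
have hle : (lam * enorm v) ^+ 2 <= (2 * enorm w) ^+ 2.
  rewrite !exprMn !enorm_sq.
  have : 0 <= 2 * lam * eps by rewrite mulr_ge0 // mulr_ge0 // ltW.
  have : sigma ^+ 2 * dotp w w <= dotp w w by rewrite ler_piMl.
  nra.
rewrite -(ler_pXn2r (n := 2)) // nnegrE.
  by rewrite mulr_ge0 ?enorm_ge0 // ltW.
by rewrite mulr_ge0 ?enorm_ge0.
Qed.

Lemma enl0_in (A : operator R d) (y v : V) :
  maximal_monotone A -> enlargement A 0 y v -> A y v.
Proof.
move=> [hmono hmax] hen.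
pose B : operator R d := fun x' => [set w | A x' w \/ (x' = y /\ w = v)].
apply: (hmax B) => [|x' w h|]; last by right.
- move=> x1 x2 u1 u2 [h1|[-> ->]] [h2|[-> ->]].
  + exact: hmono.
  + have := hen _ _ h1; rewrite oppr0.
    by rewrite -(opprB y) -(opprB v) dotpNl dotpNr opprK.
  + by have := hen _ _ h2; rewrite oppr0.
  + by rewrite !subrr dotp0l.
- by left.
Qed.

End Helpers.

Unset Implicit Arguments. Set Strict Implicit.

Theorem theorem4p1 (R : realType) (d : nat) (A : operator R d)
  (p : nat) (sigma theta : R) (x0 : 'rV[R]_d)
  (lambda : nat -> R) (y v x : nat -> 'rV[R]_d) (eps : nat -> R) :
  maximal_monotone A ->
  zeros A !=set0 ->
  closed (opdom A) ->
  (exists M : R, forall z, opdom A z -> enorm z <= M) ->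
  (1 <= p)%N -> 0 < sigma < 1 -> 0 < theta ->
  x 0%N = x0 ->
  (forall k, (1 <= k)%N -> 0 < lambda k) ->
  (forall k, (1 <= k)%N -> 0 <= eps k) ->
  (forall k, enlargement A (eps k.+1) (y k.+1) (v k.+1)) ->
  (forall k, enorm (lambda k.+1 *: v k.+1 + y k.+1 - x k) ^+ 2
               + 2 * lambda k.+1 * eps k.+1
             <= sigma ^+ 2 * enorm (y k.+1 - x k) ^+ 2) ->
  (forall k, theta <= lambda k.+1 * enorm (y k.+1 - x k) ^+ p.-1) ->
  (forall k, x k.+1 = x k - lambda k.+1 *: v k.+1) ->
  let ytilde (k : nat) := (\sum_(1 <= i < k.+1) lambda i)^-1
                            *: \sum_(1 <= i < k.+1) lambda i *: y i in
  (exists C : R, forall k : nat, (1 <= k)%N ->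
     (gap A (ytilde k) <= (C * k%:R `^ (- ((p%:R + 1) / 2)))%:E)%E)
  /\ (exists C : R, forall k : nat, (1 <= k)%N ->
     inf [set enorm (v i) | i in [set i : nat | (1 <= i <= k)%N]]
       <= C * k%:R `^ (- (p%:R / 2)))
  /\ (exists C : R, forall k : nat, (1 <= k)%N ->
     inf [set eps i | i in [set i : nat | (1 <= i <= k)%N]]
       <= C * k%:R `^ (- ((p%:R + 1) / 2)))
  /\ ((forall k, (1 <= k)%N -> eps k = 0) ->
      (exists delta kappa : R, 0 < delta /\ 0 < kappa /\
         forall z : 'rV[R]_d, (setdist (0%R : 'rV[R]_d) (A z) <= delta%:E)%E ->
                   (setdist z (zeros A) <= kappa%:E * setdist (0%R : 'rV[R]_d) (A z))%E) ->
      exists (k0 : nat) (q : R), 0 < q < 1 /\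
        forall k : nat, (k0 <= k)%N ->
          (setdist (x k.+1) (zeros A) * setdist (x k.+1) (zeros A)
             <= q%:E * (setdist (x k) (zeros A) * setdist (x k) (zeros A)))%E).
Proof.
move=> hmax [zs hzs] _ [M hM] hp /andP[s0 s1] th0 hx0 hlam heps henl hhpe hth hx ytilde.
pose N (u : 'rV[R]_d) := dotp u u.
pose a k := dotp (y k.+1 - x k) (y k.+1 - x k).
pose al k := enorm (y k.+1 - x k).
have al_sq k : al k ^+ 2 = a k by rewrite /al enorm_sq.
have al0 k : 0 <= al k by exact: enorm_ge0.
have a0 k : 0 <= a k by exact: dotpp_ge0.
have N0 u : 0 <= N u by exact: dotpp_ge0.
have lam0 k : 0 < lambda k.+1 by exact: hlam.
have eps0 k : 0 <= eps k.+1 by exact: heps.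
have ss1 : sigma ^+ 2 < 1 by rewrite expr_lt1 // ltW.
have ss0 : 0 < 1 - sigma ^+ 2 by rewrite subr_gt0.
have hhpe' k : dotp (lambda k.+1 *: v k.+1 + y k.+1 - x k) (lambda k.+1 *: v k.+1 + y k.+1 - x k)
     + 2 * lambda k.+1 * eps k.+1 <= sigma ^+ 2 * a k.
  by have := hhpe k; rewrite !enorm_sq.
have step k z : 2 * lambda k.+1 * (dotp (v k.+1) (y k.+1 - z) + eps k.+1)
     + (1 - sigma ^+ 2) * a k <= N (x k - z) - N (x k.+1 - z).
  by rewrite /N hx; apply: hpe_step; exact: hhpe'.
have zpos k : 0 <= dotp (v k.+1) (y k.+1 - zs) + eps k.+1.
  by have := henl k zs 0 hzs; rewrite subr0 dotpC; lra.
have sumA n : (1 - sigma ^+ 2) * \sum_(k < n) a k <= N (x0 - zs).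
  have h : forall k, (1 - sigma ^+ 2) * a k <= N (x k - zs) - N (x k.+1 - zs).
    move=> k; have := step k zs; have := zpos k; have := lam0 k; nra.
  have := @telescope_le R (fun k => (1 - sigma ^+ 2) * a k) (fun k => N (x k - zs)) h n.
  rewrite -mulr_sumr hx0 => h1.
  by apply: le_trans h1 _; rewrite lerBlDr lerDl.
pose D := N (x0 - zs) / (1 - sigma ^+ 2).
have D0 : 0 <= D by rewrite divr_ge0 // ltW.
have sumD n : \sum_(k < n) a k <= D.
  by rewrite /D ler_pdivlMr // mulrC.
have vbound k : theta * enorm (v k.+1) <= 2 * al k ^+ p.
  have h1 : lambda k.+1 * enorm (v k.+1) <= 2 * al k.
    have e := hhpe' k; rewrite -addrA in e.
    exact: (hpe_v (lam0 k) (eps0 k) (ltW ss1) e).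
  have h2 := hth k; rewrite -/(al k) in h2.
  have nv0 := enorm_ge0 (v k.+1).
  have P0 : 0 <= al k ^+ p.-1 by rewrite exprn_ge0.
  have h3 : theta * enorm (v k.+1) <= lambda k.+1 * al k ^+ p.-1 * enorm (v k.+1)
    by rewrite ler_wpM2r.
  have h4 : al k ^+ p.-1 * (lambda k.+1 * enorm (v k.+1)) <= al k ^+ p.-1 * (2 * al k)
    by rewrite ler_wpM2l.
  rewrite -(prednK hp) exprSr; lra.
have epsbound k : 2 * theta * eps k.+1 <= al k ^+ p.+1.
  have h1 : 2 * lambda k.+1 * eps k.+1 <= a k.
    have := hhpe' k; have := N0 (lambda k.+1 *: v k.+1 + y k.+1 - x k); rewrite /N.
    have : sigma ^+ 2 * a k <= a k by rewrite ler_piMl // ltW.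
    lra.
  have h2 := hth k; rewrite -/(al k) in h2.
  have P0 : 0 <= al k ^+ p.-1 by rewrite exprn_ge0.
  have h3 : 2 * theta * eps k.+1 <= 2 * (lambda k.+1 * al k ^+ p.-1) * eps k.+1.
    by rewrite ler_wpM2r // ler_wpM2l.
  have h4 : al k ^+ p.-1 * (2 * lambda k.+1 * eps k.+1) <= al k ^+ p.-1 * a k
    by rewrite ler_wpM2l.
  rewrite -(prednK hp) -al_sq -exprD addn2 in h4.
  rewrite -(prednK hp); lra.
have spos k : (1 <= k)%N -> 0 < Num.sqrt (k%:R : R).
  by move=> k1; rewrite sqrtr_gt0 ltr0n.
have small k : (1 <= k)%N ->
    exists2 i, (i < k)%N & Num.sqrt (k%:R : R) * al i <= Num.sqrt D.
  move=> k1; have [i ik hi] := exists_small a k1.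
  exists i => //.
  have h : (Num.sqrt (k%:R : R) * al i) ^+ 2 <= D.
    rewrite exprMn sqr_sqrtr ?ler0n // al_sq; exact: le_trans hi (sumD k).
  move: h; rewrite -ler_sqrt // sqrtr_sqr ger0_norm //.
  by rewrite mulr_ge0 // sqrtr_ge0.
split; last split; last split.
- set K := N x0 + M ^+ 2.
  set D' := D + 1.
  set c := Num.sqrt (2 * D') ^+ p.-1.
  have D'0 : 0 < D' by rewrite /D'; lra.
  have D'1 : 0 < 2 * D' by lra.
  have c0 : 0 <= c by rewrite exprn_ge0 // sqrtr_ge0.
  have K0 : 0 <= K by rewrite addr_ge0 // sqr_ge0.
  exists (2 * K * c / theta) => k k1.
  have s0' := spos k k1.
  rewrite natr1 powR_half ?ltr0n //.
  have k0 : 0 < (k%:R : R) by rewrite ltr0n.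
  have ks : Num.sqrt (k%:R : R) ^+ 2 = k%:R by rewrite sqr_sqrtr // ltW.
  set s := Num.sqrt (k%:R : R) in s0' ks *.
  set b := Num.sqrt (2 * D') / s.
  have b0 : 0 < b by rewrite divr_gt0 // sqrtr_gt0.
  have b2 : b ^+ 2 = 2 * D' / k%:R by rewrite expr_div_n sqr_sqrtr ?ks // ltW.
  have bq : b ^+ p.-1 = c / s ^+ p.-1 by rewrite expr_div_n.
  have bq0 : 0 < b ^+ p.-1 by rewrite exprn_gt0.
  pose Lam := \sum_(i < k) lambda i.+1.
  have hLam : \sum_(1 <= i < k.+1) lambda i = Lam by rewrite big_add1 /= big_mkord.
  have hY : \sum_(1 <= i < k.+1) lambda i *: y i = \sum_(i < k) lambda i.+1 *: y i.+1
    by rewrite big_add1 /= big_mkord.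
  have peri i : theta - theta / b ^+ 2 * a i <= lambda i.+1 * b ^+ p.-1.
    have bb : 0 <= lambda i.+1 * b ^+ p.-1 by rewrite mulr_ge0 // ltW.
    case: (leP (al i) b) => hab.
    - have h2 : al i ^+ p.-1 <= b ^+ p.-1 by apply: lerXn2r; rewrite ?nnegrE ?al0 // ltW.
      have h1 := hth i; rewrite -/(al i) in h1.
      have h3 : lambda i.+1 * al i ^+ p.-1 <= lambda i.+1 * b ^+ p.-1 by rewrite ler_wpM2l // ltW.
      have h4 : 0 <= theta / b ^+ 2 * a i.
        by apply: mulr_ge0 => //; apply: divr_ge0; [exact: ltW | apply: exprn_ge0; exact: ltW].
      lra.
    - have h1 : b ^+ 2 < a i by rewrite -al_sq !expr2; nra.
      have h2 : theta <= theta / b ^+ 2 * a i.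
        rewrite mulrAC ler_pdivlMr ?exprn_gt0 // ler_pM2l //; exact: ltW.
      lra.
  have hsum : \sum_(i < k) (theta - theta / b ^+ 2 * a i) <= \sum_(i < k) lambda i.+1 * b ^+ p.-1.
    by apply: ler_sum => i _; exact: peri.
  rewrite sumrB sumr_const card_ord -mulr_natr -mulr_sumr -mulr_suml -/Lam in hsum.
  have hD : theta / b ^+ 2 * \sum_(i < k) a i <= theta / b ^+ 2 * D.
    by apply: ler_wpM2l; [apply: divr_ge0; [exact: ltW | apply: exprn_ge0; exact: ltW] | exact: sumD].
  have hD2 : theta / b ^+ 2 * D <= theta * k%:R / 2.
    have -> : theta / b ^+ 2 * D = (theta * k%:R / 2) * (D / D').
      rewrite b2; field; rewrite ?lt0r_neq0 //.
    have : D / D' <= 1 by rewrite ler_pdivrMr // mul1r /D' lerDl.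
    have : 0 <= theta * k%:R / 2 by rewrite divr_ge0 // mulr_ge0 // ltW.
    nra.
  have hLamb : theta * k%:R / 2 <= b ^+ p.-1 * Lam by lra.
  have Lam0 : 0 < Lam.
    have : 0 < b ^+ p.-1 * Lam by apply: lt_le_trans hLamb; rewrite divr_gt0 // mulr_gt0.
    by rewrite pmulr_rgt0.
  rewrite /gap; apply: ge_ereal_sup => _ [z [xi [hz [hxi ->]]]]; rewrite lee_fin.
  rewrite /ytilde hLam hY -/Lam.
  set g := dotp xi (Lam^-1 *: \sum_(i < k) lambda i.+1 *: y i.+1 - z).
  have hg : Lam * g = \sum_(i < k) lambda i.+1 * dotp xi (y i.+1 - z).
    rewrite /g dotpBr dotpZr dotp_sumr.
    under [in RHS]eq_bigr => i _ do rewrite dotpBr mulrBr.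
    rewrite sumrB -mulr_suml -/Lam.
    under eq_bigr => i _ do rewrite dotpZr.
    by rewrite mulrBr mulrA mulfV ?lt0r_neq0 // mul1r.
  have hper i : 2 * (lambda i.+1 * dotp xi (y i.+1 - z)) <= N (x i - z) - N (x i.+1 - z).
    have h1 := henl i z xi hxi.
    rewrite dotpBr (dotpC _ (v i.+1)) (dotpC _ xi) in h1.
    have h2 := step i z.
    have h3 : lambda i.+1 * dotp xi (y i.+1 - z) <= lambda i.+1 * (dotp (v i.+1) (y i.+1 - z) + eps i.+1).
      apply: ler_wpM2l; [exact: ltW | lra].
    have h4 : 0 <= (1 - sigma ^+ 2) * a i by apply: mulr_ge0 => //; exact: ltW.
    lra.
  have htel := @telescope_le R (fun i => 2 * (lambda i.+1 * dotp xi (y i.+1 - z))) (fun i => N (x i - z)) hper k.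
  rewrite -mulr_sumr hx0 in htel.
  have hz2 : N z <= M ^+ 2.
    rewrite /N -enorm_sq; apply: lerXn2r; rewrite ?nnegrE ?enorm_ge0 ?hM //.
    by apply: le_trans (hM z hz); exact: enorm_ge0.
  have hx2 := nsqB_le x0 z.
  have hxk := N0 (x k - z).
  have hLg : Lam * g <= K by rewrite hg /K; rewrite /N in hxk hz2 htel *; lra.
  have sq0 : 0 < s ^+ p.-1 by rewrite exprn_gt0.
  have -> : 2 * K * c / theta * (s ^+ p.+1)^-1 = 2 * K * c / (theta * s ^+ p.+1).
    by rewrite (invfM theta) mulrA.
  have sp1 : s ^+ p.+1 = s ^+ p.-1 * k%:R by rewrite -ks -exprD addn2 prednK.
  case: (lerP g 0) => hg0.
    apply: le_trans hg0 _; rewrite divr_ge0 // ?mulr_ge0 // ltW // exprn_gt0 //.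
  rewrite ler_pdivlMr ?mulr_gt0 ?exprn_gt0 //.
  have e1 : theta * k%:R / 2 * g <= b ^+ p.-1 * Lam * g by rewrite ler_wpM2r // ltW.
  have e2 : b ^+ p.-1 * (Lam * g) <= b ^+ p.-1 * K by rewrite ler_wpM2l // ltW.
  have e3 : b ^+ p.-1 * s ^+ p.-1 = c by rewrite bq mulfVK // lt0r_neq0.
  have e5 : theta * k%:R / 2 * g <= b ^+ p.-1 * K by lra.
  have e6 : b ^+ p.-1 * K * s ^+ p.-1 = c * K by rewrite -e3; ring.
  have e4 := ler_wpM2r (ltW sq0) e5.
  rewrite sp1; lra.
- exists (2 * Num.sqrt D ^+ p / theta) => k k1.
  have [i ik hi] := small k k1.
  have s0' := spos k k1.
  rewrite powR_half ?ltr0n //.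
  set s := Num.sqrt (k%:R : R) in s0' hi *.
  apply: (@le_trans _ _ (enorm (v i.+1))).
    apply: ge_inf; first by exists 0 => _ [j _ <-]; exact: enorm_ge0.
    by exists i.+1 => //=; rewrite ltn0Sn ik.
  have hv := vbound i.
  have hp' : (s * al i) ^+ p <= Num.sqrt D ^+ p.
    apply: lerXn2r; rewrite // nnegrE ?mulr_ge0 // ?sqrtr_ge0 // ltW.
  rewrite exprMn in hp'.
  have sp0 : 0 < s ^+ p by rewrite exprn_gt0.
  have -> : 2 * Num.sqrt D ^+ p / theta * (s ^+ p)^-1 = 2 * Num.sqrt D ^+ p / (theta * s ^+ p).
    by rewrite invfM mulrA.
  rewrite ler_pdivlMr ?mulr_gt0 //.
  have h5 : theta * enorm (v i.+1) * s ^+ p <= 2 * al i ^+ p * s ^+ p by rewrite ler_wpM2r // ltW.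
  lra.
- exists (Num.sqrt D ^+ p.+1 / (2 * theta)) => k k1.
  have [i ik hi] := small k k1.
  have s0' := spos k k1.
  rewrite natr1 powR_half ?ltr0n //.
  set s := Num.sqrt (k%:R : R) in s0' hi *.
  apply: (@le_trans _ _ (eps i.+1)).
    apply: ge_inf; first by exists 0 => _ [j /andP[j1 _] <-]; exact: heps.
    by exists i.+1 => //=; rewrite ltn0Sn ik.
  have hv := epsbound i.
  have hp' : (s * al i) ^+ p.+1 <= Num.sqrt D ^+ p.+1.
    apply: lerXn2r; rewrite // nnegrE ?mulr_ge0 // ?sqrtr_ge0 // ltW.
  rewrite exprMn in hp'.
  have sp0 : 0 < s ^+ p.+1 by rewrite exprn_gt0.
  have -> : Num.sqrt D ^+ p.+1 / (2 * theta) * (s ^+ p.+1)^-1 = Num.sqrt D ^+ p.+1 / (2 * theta * s ^+ p.+1).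
    by rewrite (invfM (2 * theta)) mulrA.
  rewrite ler_pdivlMr ?mulr_gt0 //.
  have h5 : 2 * theta * eps i.+1 * s ^+ p.+1 <= al i ^+ p.+1 * s ^+ p.+1 by rewrite ler_wpM2r // ltW.
  lra.
move=> heps0 [delta [kappa [de0 [ka0 heb]]]].
set eta := Num.min 1 (delta * theta / 2).
have eta0 : 0 < eta by rewrite lt_min ltr01 divr_gt0 // mulr_gt0.
have eta1 : eta <= 1 by rewrite ge_min lexx.
have eta2 : eta <= delta * theta / 2 by rewrite ge_min lexx orbT.
pose S n := \sum_(j < n) a j.
have Smono n m : S n <= S (n + m)%N.
  elim: m => [|m IH]; first by rewrite addn0.
  have h : S (n + m).+1 = S (n + m)%N + a (n + m)%N by rewrite /S big_ord_recr.
  rewrite addnS h; have := a0 (n + m)%N; lra.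
have hsup : has_sup (range S).
  by split; [exists (S 0%N); exists 0%N | exists D => _ [n _ <-]; exact: sumD].
have eta20 : 0 < eta ^+ 2 by rewrite exprn_gt0.
have [_ [n0 _ <-] hn0] := sup_adherent eta20 hsup.
have small_a k : (n0 <= k)%N -> a k < eta ^+ 2.
  move=> hk.
  have h1 : S k.+1 <= sup (range S) by apply: sup_upper_bound => //; exists k.+1.
  have h2 : S n0 <= S k by have := Smono n0 (k - n0)%N; rewrite subnKC.
  have h3 : S k.+1 = S k + a k by rewrite /S big_ord_recr.
  lra.
exists n0.
set c := 2 * kappa / theta.
have c0 : 0 <= c by rewrite divr_ge0 // ?mulr_ge0 // ltW.
set m := 2 * (1 + c ^+ 2).
have m1 : 2 <= m by rewrite /m; have := sqr_ge0 c; lra.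
have m0 : 0 < m by lra.
set q := 1 - (1 - sigma ^+ 2) / m.
exists q; split.
  have h1 : 0 < (1 - sigma ^+ 2) / m by rewrite divr_gt0.
  have h2 : (1 - sigma ^+ 2) / m < 1 by rewrite ltr_pdivrMr // mul1r; have := sqr_ge0 sigma; lra.
  by apply/andP; split; rewrite /q; lra.
move=> k hk.
have ak := small_a k hk.
have alk : al k <= eta.
  rewrite -(ler_pXn2r (n := 2)) ?nnegrE ?al0 //; last exact: ltW.
  by rewrite al_sq; exact: ltW.
have alp : al k ^+ p <= al k.
  rewrite -(prednK hp) exprS -[X in _ <= X]mulr1; apply: ler_wpM2l => //.
  apply: exprn_ile1 => //; lra.
have vb : theta * enorm (v k.+1) <= 2 * al k by have := vbound k; lra.
have vd : enorm (v k.+1) <= delta.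
  have : theta * enorm (v k.+1) <= theta * delta by have := eta2; rewrite ler_pdivlMr //; lra.
  by rewrite ler_pM2l.
have epsk : eps k.+1 = 0 by exact: heps0.
have hA : A (y k.+1) (v k.+1).
  apply: enl0_in => //; rewrite -epsk; exact: henl.
have [t [t0 ht tlb _]] := setdistP (0 : 'rV[R]_d) (ex_intro _ (v k.+1) hA : A (y k.+1) !=set0).
have tv : t <= enorm (v k.+1) by have := tlb _ hA; rewrite sub0r enormN.
have := heb (y k.+1); rewrite ht lee_fin => /(_ (le_trans tv vd)).
have [ry [ry0 hry _ ryad]] := setdistP (y k.+1) (ex_intro _ zs hzs : zeros A !=set0).
rewrite hry -EFinM lee_fin => hyk.
have ryb : ry <= c * al k.
  have : theta * ry <= theta * (c * al k).
    have : kappa * t <= kappa * enorm (v k.+1) by rewrite ler_pM2l.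
    have -> : theta * (c * al k) = kappa * 2 * al k by rewrite /c; field; rewrite lt0r_neq0.
    have : kappa * (theta * enorm (v k.+1)) <= kappa * (2 * al k) by rewrite ler_pM2l.
    have : 0 <= theta * (kappa * t - ry) by rewrite mulr_ge0 ?subr_ge0 //; exact: ltW.
    nra.
  by rewrite ler_pM2l.
have [rk [rk0 hrk rklb rkad]] := setdistP (x k) (ex_intro _ zs hzs : zeros A !=set0).
have [rk1 [rk10 hrk1 rk1lb _]] := setdistP (x k.+1) (ex_intro _ zs hzs : zeros A !=set0).
rewrite hrk hrk1 -!EFinM lee_fin.
have sqle (u : 'rV[R]_d) (r : R) : 0 <= r -> r <= enorm u -> r ^+ 2 <= N u.
  move=> r0 h; rewrite /N -enorm_sq; apply: lerXn2r => //; rewrite nnegrE ?enorm_ge0 //.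
have hrk2 : rk ^+ 2 / 2 <= ry ^+ 2 + a k.
  apply: lim_sq_le => // e e0.
  have [z hz hze] := ryad e e0.
  have h1 := sqle _ _ rk0 (rklb z hz).
  have ex : x k - z = (x k - y k.+1) - (z - y k.+1) by rewrite opprB addrA subrK.
  have h2 := nsqB_le (x k - y k.+1) (z - y k.+1); rewrite -ex in h2.
  have h3 : dotp (x k - y k.+1) (x k - y k.+1) = a k by rewrite -(opprB (y k.+1)) dotpNl dotpNr opprK.
  have h4 : dotp (z - y k.+1) (z - y k.+1) <= (ry + e) ^+ 2.
    rewrite -(opprB (y k.+1)) dotpNl dotpNr opprK -enorm_sq.
    apply: lerXn2r; rewrite ?nnegrE ?enorm_ge0 //; [lra | exact: ltW].
  rewrite /N in h1; lra.
have hrk12 : rk1 ^+ 2 <= rk ^+ 2 + - ((1 - sigma ^+ 2) * a k).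
  apply: lim_sq_le => // e e0.
  have [z hz hze] := rkad e e0.
  have h1 := sqle _ _ rk10 (rk1lb z hz).
  have h2 := step k z.
  have h3 : 0 <= dotp (v k.+1) (y k.+1 - z) + eps k.+1.
    by have := henl k z 0 hz; rewrite subr0 dotpC; lra.
  have h4 : 0 <= 2 * lambda k.+1 * (dotp (v k.+1) (y k.+1 - z) + eps k.+1).
    by apply: mulr_ge0 => //; apply: mulr_ge0 => //; exact: ltW.
  have h5 : N (x k - z) <= (rk + e) ^+ 2.
    rewrite /N -enorm_sq; apply: lerXn2r; rewrite ?nnegrE ?enorm_ge0 //; [lra | exact: ltW].
  lra.
have ryc : ry ^+ 2 <= c ^+ 2 * a k.
  rewrite -al_sq -exprMn; apply: lerXn2r => //; rewrite nnegrE mulr_ge0 //.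
have hrkm : rk ^+ 2 / m <= a k.
  rewrite ler_pdivrMr //; rewrite /m.
  have : rk ^+ 2 <= 2 * ry ^+ 2 + 2 * a k by lra.
  lra.
have hfin : (1 - sigma ^+ 2) * (rk ^+ 2 / m) <= (1 - sigma ^+ 2) * a k.
  by apply: ler_wpM2l => //; exact: ltW.
have -> : q * (rk * rk) = rk ^+ 2 - (1 - sigma ^+ 2) * (rk ^+ 2 / m) by rewrite /q; ring.
rewrite -expr2; lra.
Qed.
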